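(* For every rule of G3lp with premises $S_1,\dots,S_k$ ($k\ge 0$) and conclusion $S$: if each forgetful projection $S_i^\circ$ is derivable in G3s + $(\Box\mathrm{Cut})$, then $S^\circ$ is derivable in G3s + $(\Box\mathrm{Cut})$. That is, the forgetful projection of every G3lp rule is admissible in G3s + $(\Box\mathrm{Cut})$.
   Context: S4 formulas: $A ::= \bot \mid P \mid A_0\to A_1 \mid \Box A$ ($P$ atomic). LP terms: $t ::= c \mid x \mid t_0\cdot t_1 \mid t_0+t_1 \mid\ !t$ ($c$ constants, $x$ variables); LP formulas: $A ::= \bot \mid P \mid A_0\to A_1 \mid t{:}A$. Axioms of LP: A0 a finite set of axiom schemes of classical propositional logic; A1 $t{:}F\to F$; A2 $s{:}(F\to G)\to(t{:}F\to (s\cdot t){:}G)$; A3 $t{:}F\to\ !t{:}(t{:}F)$; A4 $s{:}F\to(s+t){:}F$ and $t{:}F\to(s+t){:}F$. Forgetful projection: $\bot^\circ=\bot$, $P^\circ=P$, $(A\to B)^\circ=A^\circ\to B^\circ$, $(t{:}A)^\circ=\Box A^\circ$, extended to multisets and sequents componentwise. Sequents $\Gamma\supset\Delta$ use finite multisets; $\Box\Gamma:=\{\Box B\mid B\in\Gamma\}$. G3s rules: (Ax) $P,\Gamma\supset\Delta,P$ ($P$ atomic); $(\bot\supset)$ $\bot,\Gamma\supset\Delta$; $(\to\supset)$ from $\Gamma\supset\Delta,A$ and $B,\Gamma\supset\Delta$ infer $A\to B,\Gamma\supset\Delta$; $(\supset\to)$ from $A,\Gamma\supset\Delta,B$ infer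 $\Gamma\supset\Delta,A\to B$; $(\Box\supset)$ from $A,\Box A,\Gamma\supset\Delta$ infer $\Box A,\Gamma\supset\Delta$; $(\supset\Box)$ from $\Box\Gamma\supset A$ infer $\Gamma',\Box\Gamma\supset\Delta',\Box A$. The rule $(\Box\mathrm{Cut})$: from $\Gamma\supset\Delta,\Box A,\Box B$ and $\Gamma\supset\Delta,\Box(A\to B),\Box B$ infer $\Gamma\supset\Delta,\Box B$. G3lp has the rules (Ax), $(\bot\supset)$, $(\to\supset)$, $(\supset\to)$ (for LP formulas) and: $(\supset{:})_c$ from $\supset A$ infer $\Gamma\supset\Delta,c{:}A$, where $A$ is an axiom A0–A4 and $c$ a constant; $(\supset{:})_t$ from $t{:}A\supset A$ infer $t{:}A,\Gamma\supset\Delta,t{:}A$; $({:}\supset)$ from $A,t{:}A,\Gamma\supset\Delta$ infer $t{:}A,\Gamma\supset\Delta$; $(\supset !)$ from $\Gamma\supset\Delta,t{:}A,\,!t{:}t{:}A$ infer $\Gamma\supset\Delta,\,!t{:}t{:}A$; $(\supset +)$ from $\Gamma\supset\Delta,s{:}A,t{:}A,(s+t){:}A$ infer $\Gamma\supset\Delta,(s+t){:}A$; $(\supset\cdot)$ from $\Gamma\supset\Delta,s{:}(A\to B),(s\cdot t){:}B$ and $\Gamma\supset\Delta,t{:}A,(s\cdot t){:}B$ infer $\Gamma\supset\Delta,(s\cdot t){:}B$. *)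

(* Defs.v *)
From Stdlib Require Import List Permutation.
Import ListNotations.

Inductive sform : Type :=
| SBot : sform
| SAt : nat -> sform
| SImp : sform -> sform -> sform
| SBox : sform -> sform.

(* LP terms: constants c_n, variables x_n *)
Inductive lterm : Type :=
| TC : nat -> lterm
| TV : nat -> lterm
| TApp : lterm -> lterm -> lterm
| TSum : lterm -> lterm -> lterm
| TBang : lterm -> lterm.

Inductive lform : Type :=
| LBot : lform
| LAt : nat -> lform
| LImp : lform -> lform -> lform
| LPf : lterm -> lform -> lform.

(* A0: a fixed finite set of axiom schemes of classical propositional
   logic (complete for the bot/-> language). *)
Inductive A0 : lform -> Prop :=
| A0_K : forall A B, A0 (LImp A (LImp B A))
| A0_S : forall A B C,
    A0 (LImp (LImp A (LImp B C)) (LImp (LImp A B) (LImp A C)))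
| A0_DN : forall A, A0 (LImp (LImp (LImp A LBot) LBot) A).

Inductive LPaxiom : lform -> Prop :=
| Ax_A0 : forall A, A0 A -> LPaxiom A
| Ax_A1 : forall t F, LPaxiom (LImp (LPf t F) F)
| Ax_A2 : forall s t F G,
    LPaxiom (LImp (LPf s (LImp F G)) (LImp (LPf t F) (LPf (TApp s t) G)))
| Ax_A3 : forall t F, LPaxiom (LImp (LPf t F) (LPf (TBang t) (LPf t F)))
| Ax_A4l : forall s t F, LPaxiom (LImp (LPf s F) (LPf (TSum s t) F))
| Ax_A4r : forall s t F, LPaxiom (LImp (LPf t F) (LPf (TSum s t) F)).

(* Sequents Gamma ⊃ Delta: pairs of lists, read as multisets
   (derivability in G3s is closed under permutation, see s_perm). *)
Definition sseq : Type := (list sform * list sform)%type.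
Definition lseq : Type := (list lform * list lform)%type.

Fixpoint fproj (A : lform) : sform :=
  match A with
  | LBot => SBot
  | LAt p => SAt p
  | LImp A B => SImp (fproj A) (fproj B)
  | LPf _ A => SBox (fproj A)
  end.

Definition fproj_seq (S : lseq) : sseq :=
  (map fproj (fst S), map fproj (snd S)).

(* Derivability in G3s + (BoxCut).  Principal formulas are written at the
   head of the lists; the permutation rule makes antecedent/succedent
   multisets. *)
Inductive G3sC : list sform -> list sform -> Prop :=
| s_ax : forall p G D, G3sC (SAt p :: G) (SAt p :: D)
| s_botL : forall G D, G3sC (SBot :: G) D
| s_impL : forall A B G D,
    G3sC G (A :: D) -> G3sC (B :: G) D -> G3sC (SImp A B :: G) D
| s_impR : forall A B G D,
    G3sC (A :: G) (B :: D) -> G3sC G (SImp A B :: D)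
| s_boxL : forall A G D,
    G3sC (A :: SBox A :: G) D -> G3sC (SBox A :: G) D
| s_boxR : forall A G G' D',
    G3sC (map SBox G) [A] -> G3sC (G' ++ map SBox G) (SBox A :: D')
| s_boxcut : forall A B G D,
    G3sC G (SBox A :: SBox B :: D) ->
    G3sC G (SBox (SImp A B) :: SBox B :: D) ->
    G3sC G (SBox B :: D)
| s_perm : forall G D G' D',
    G3sC G D -> Permutation G G' -> Permutation D D' -> G3sC G' D'.

Definition G3sC_derivable (S : sseq) : Prop := G3sC (fst S) (snd S).

Inductive lp_rule : list lseq -> lseq -> Prop :=
| lp_ax : forall p G D, lp_rule [] (LAt p :: G, LAt p :: D)
| lp_botL : forall G D, lp_rule [] (LBot :: G, D)
| lp_impL : forall A B G D,
    lp_rule [(G, A :: D); (B :: G, D)] (LImp A B :: G, D)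
| lp_impR : forall A B G D,
    lp_rule [(A :: G, B :: D)] (G, LImp A B :: D)
| lp_colon_c : forall A c G D,
    LPaxiom A -> lp_rule [([], [A])] (G, LPf (TC c) A :: D)
| lp_colon_t : forall t A G D,
    lp_rule [([LPf t A], [A])] (LPf t A :: G, LPf t A :: D)
| lp_colonL : forall t A G D,
    lp_rule [(A :: LPf t A :: G, D)] (LPf t A :: G, D)
| lp_bang : forall t A G D,
    lp_rule [(G, LPf t A :: LPf (TBang t) (LPf t A) :: D)]
            (G, LPf (TBang t) (LPf t A) :: D)
| lp_plus : forall s t A G D,
    lp_rule [(G, LPf s A :: LPf t A :: LPf (TSum s t) A :: D)]
            (G, LPf (TSum s t) A :: D)
| lp_dot : forall s t A B G D,
    lp_rule [(G, LPf s (LImp A B) :: LPf (TApp s t) B :: D);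
             (G, LPf t A :: LPf (TApp s t) B :: D)]
            (G, LPf (TApp s t) B :: D).

(* Main.v *)
Require Import Defs.
From Stdlib Require Import List Permutation.
Import ListNotations.

Lemma pe G D G' D' : G3sC G D -> Permutation G G' -> Permutation D D' -> G3sC G' D'.
Proof. intros; eapply s_perm; eauto. Qed.

Lemma ident : forall A G D, G3sC (A :: G) (A :: D).
Proof.
  induction A; intros G D.
  - apply s_botL.
  - apply s_ax.
  - apply s_impR. eapply pe with (G := SImp A1 A2 :: A1 :: G) (D := A2 :: D).
    + apply s_impL.
      * apply IHA1.
      * apply IHA2.
    + apply perm_swap.
    + apply Permutation_refl.
  - eapply pe with (G := G ++ map SBox [A]).
    + apply s_boxR. simpl. apply s_boxL. apply IHA.
    + simpl. apply Permutation_sym, Permutation_cons_append.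
    + apply Permutation_refl.
Qed.

Lemma wL : forall G D, G3sC G D -> forall F, G3sC (F :: G) D.
Proof.
  induction 1; intro F.
  - eapply pe; [apply (s_ax p (F :: G) D) | apply perm_swap | apply Permutation_refl].
  - eapply pe; [apply (s_botL (F :: G) D) | apply perm_swap | apply Permutation_refl].
  - eapply pe; [apply (s_impL A B (F :: G) D) | apply perm_swap | apply Permutation_refl].
    + apply IHG3sC1.
    + eapply pe; [apply IHG3sC2 | apply perm_swap | apply Permutation_refl].
  - apply s_impR. eapply pe; [apply IHG3sC | apply perm_swap | apply Permutation_refl].
  - eapply pe; [apply (s_boxL A (F :: G) D) | apply perm_swap | apply Permutation_refl].
    eapply pe; [apply (IHG3sC F) | |apply Permutation_refl].
    eapply perm_trans; [apply perm_swap|]. apply perm_skip, perm_swap.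
  - apply (s_boxR A G (F :: G') D'). assumption.
  - apply (s_boxcut A); auto.
  - eapply pe; [apply IHG3sC | apply perm_skip; eauto | eauto].
Qed.

Lemma wR : forall G D, G3sC G D -> forall F, G3sC G (F :: D).
Proof.
  induction 1; intro F.
  - eapply pe; [apply (s_ax p G (F :: D)) | apply Permutation_refl | apply perm_swap].
  - apply s_botL.
  - apply s_impL.
    + eapply pe; [apply IHG3sC1 | apply Permutation_refl | apply perm_swap].
    + apply IHG3sC2.
  - eapply pe; [apply (s_impR A B G (F :: D)) | apply Permutation_refl | apply perm_swap].
    eapply pe; [apply IHG3sC | apply Permutation_refl | apply perm_swap].
  - apply s_boxL. auto.
  - eapply pe; [apply (s_boxR A G G' (F :: D')) | apply Permutation_refl | apply perm_swap].
    assumption.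
  - eapply pe; [apply (s_boxcut A B G (F :: D)) | apply Permutation_refl | apply perm_swap].
    + eapply pe; [apply IHG3sC1 | apply Permutation_refl |].
      eapply perm_trans; [apply perm_swap|]. apply perm_skip, perm_swap.
    + eapply pe; [apply IHG3sC2 | apply Permutation_refl |].
      eapply perm_trans; [apply perm_swap|]. apply perm_skip, perm_swap.
  - eapply pe; [apply IHG3sC | eauto | apply perm_skip; eauto].
Qed.

Lemma boxweak : forall P G D, G3sC [] [P] -> G3sC G (SBox P :: D).
Proof.
  intros P G D H. rewrite <- (app_nil_r G).
  change (G3sC (G ++ map SBox []) (SBox P :: D)). apply s_boxR. exact H.
Qed.

Lemma mp : forall P Q G D, G3sC G (SBox P :: SBox Q :: D) -> G3sC [] [SImp P Q] ->
  G3sC G (SBox Q :: D).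
Proof. intros. apply (s_boxcut P Q); auto. apply boxweak; auto. Qed.

Lemma contr : forall B G D, G3sC G (SBox B :: SBox B :: D) -> G3sC G (SBox B :: D).
Proof. intros. apply (mp B B); auto. apply s_impR. apply ident. Qed.

Lemma Kprov : forall P Q, G3sC [] [SImp (SBox (SImp P Q)) (SImp (SBox P) (SBox Q))].
Proof.
  intros. apply s_impR, s_impR.
  change (G3sC ([] ++ map SBox [P; SImp P Q]) [SBox Q]). apply (s_boxR Q _ [] []).
  simpl. apply s_boxL.
  eapply pe with (G := SBox (SImp P Q) :: P :: SBox P :: []); [| |apply Permutation_refl].
  - apply s_boxL. apply s_impL.
    + eapply pe; [apply (ident P (SBox (SImp P Q) :: SBox P :: []) [Q]) | apply perm_swap |apply Permutation_refl].
    + apply ident.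
  - eapply perm_trans; [apply perm_swap|]. apply perm_skip, perm_swap.
Qed.

Definition rel (x y : sform) : Prop := y = x \/ exists a, x = SBox a /\ y = SBox (SBox a).

Lemma rel_refl : forall x, rel x x. Proof. left; auto. Qed.

Lemma Forall2_refl_rel : forall l, Forall2 rel l l.
Proof. induction l; constructor; auto using rel_refl. Qed.

Lemma rep : forall G D, G3sC G D -> forall D2, Forall2 rel D D2 -> G3sC G D2.
Proof.
  induction 1; intros D2 HF.
  - inversion HF as [|x y l l' Hr Hl]; subst. destruct Hr as [->|[a [Ha _]]]; [apply s_ax|discriminate].
  - apply s_botL.
  - apply s_impL.
    + apply IHG3sC1. constructor; auto using rel_refl.
    + apply IHG3sC2; auto.
  - inversion HF as [|x y l l' Hr Hl]; subst. destruct Hr as [->|[a [Ha _]]]; [|discriminate].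
    apply s_impR. apply IHG3sC. constructor; auto using rel_refl.
  - apply s_boxL; auto.
  - inversion HF as [|x y l l' Hr Hl]; subst. destruct Hr as [->|[a [Ha ->]]].
    + apply s_boxR; auto.
    + injection Ha as ->. apply s_boxR.
      change (G3sC ([] ++ map SBox G) [SBox a]). apply (s_boxR a G [] []). auto.
  - inversion HF as [|x y l l' Hr Hl]; subst. destruct Hr as [->|[a [Ha ->]]].
    + apply (s_boxcut A).
      * apply IHG3sC1. repeat constructor; auto using rel_refl.
      * apply IHG3sC2. repeat constructor; auto using rel_refl.
    + injection Ha as ->.
      assert (H1' : G3sC G (SBox (SBox A) :: SBox (SBox a) :: l')).
      { apply IHG3sC1. constructor; [right; eauto|]. constructor; [right; eauto|auto]. }
      assert (H2' : G3sC G (SBox (SBox (SImp A a)) :: SBox (SBox a) :: l')).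
      { apply IHG3sC2. constructor; [right; eauto|]. constructor; [right; eauto|auto]. }
      apply (s_boxcut (SBox A) (SBox a)); auto.
      apply (mp (SBox (SImp A a))); [|apply Kprov].
      eapply pe; [apply (wR _ _ H2' (SBox (SImp (SBox A) (SBox a)))) | apply Permutation_refl | apply perm_swap].
  - destruct (Permutation_Forall2 (Permutation_sym H1) HF) as [D1 [HP HF1]].
    eapply pe; [apply IHG3sC; eauto | eauto | apply Permutation_sym; auto].
Qed.

Theorem mainTheorem2 :
  forall (prems : list lseq) (concl : lseq),
    lp_rule prems concl ->
    (forall S, In S prems -> G3sC_derivable (fproj_seq S)) ->
    G3sC_derivable (fproj_seq concl).
Proof.
  intros prems concl Hr H. unfold G3sC_derivable, fproj_seq in *.
  destruct Hr; simpl in *.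
  - apply s_ax.
  - apply s_botL.
  - apply s_impL.
    + apply (H (G, A :: D)); auto.
    + apply (H (B :: G, D)); auto.
  - apply s_impR. apply (H (A :: G, B :: D)); auto.
  - apply boxweak. apply (H ([], [A])); auto.
  - specialize (H ([LPf t A], [A]) (or_introl eq_refl)). simpl in H.
    eapply pe; [apply (s_boxR (fproj A) [fproj A] (map fproj G) (map fproj D)) | |apply Permutation_refl].
    + exact H.
    + simpl. apply Permutation_sym, Permutation_cons_append.
  - apply s_boxL. apply (H (A :: LPf t A :: G, D)); auto.
  - specialize (H _ (or_introl eq_refl)). simpl in H.
    apply contr. eapply rep; [exact H|].
    constructor; [right; eauto|]. apply Forall2_refl_rel.
  - specialize (H _ (or_introl eq_refl)). simpl in H.
    apply contr, contr. exact H.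
  - pose proof (H _ (or_introl eq_refl)) as H1. pose proof (H _ (or_intror (or_introl eq_refl))) as H2.
    simpl in H1, H2. apply (s_boxcut (fproj A)); auto.
Qed.
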